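(* Let $K_4$ be the complete graph on $4$ vertices. Then $K_4\notin\mathfrak{F}$, but $K_4\in\mathcal{P}$.
   Context: Graphs are finite, simple and undirected. $\mathbb{T}=\{z\in\mathbb{C}:|z|=1\}$, $\mathbb{I}=[0,2\pi)$. A $\mathbb{T}$-gain on $G$ is a map $\varphi$ from oriented edges to $\mathbb{T}$ with $\varphi(\overrightarrow{e_{ts}})=\varphi(\overrightarrow{e_{st}})^{-1}$; $A(\Phi)$ for $\Phi=(G,\varphi)$ is the Hermitian matrix with $(s,t)$ entry $\varphi(\overrightarrow{e_{st}})$ if $v_s\sim v_t$, else $0$; $\mathcal{T}_G$ is the set of all $\mathbb{T}$-gain graphs on $G$. $\Re(A)\ge0$ means the real part of every entry of $A$ is nonnegative. The gain of a directed cycle is the product of gains of its oriented edges. A rooted spanning tree $T$ with root $v_r$ induces the tree order ($v_x\le v_y$ iff $v_x$ is on the $T$-path from $v_r$ to $v_y$); $T$ is normal if adjacent vertices of $G$ are always comparable. The suitably oriented graph $\overrightarrow{G_T}$ orients each edge $e_{st}$ with $v_s\le v_t$ as $\overrightarrow{e_{st}}$ if $e_{st}\in E(T)$ and as $\overrightarrow{e_{ts}}$ otherwise; the $m-n+1$ fundamental cycles $C_j$ of $T$ become directed cycles $\overrightarrow{C_j(T)}$. For $r=(c_1,\dots,c_{m-n+1})\in\mathbb{I}^{m-n+1}$, $\mathcal{A}_T(r)=\{(G,\varphi)\in\mathcal{T}_G:\varphi(\overrightarrow{C_j(T)})=e^{ic_j}\ \forall j\}$. $G$ has property GNRP (w.r.t.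 normal spanning tree $T$) if for each $r$ there is $\Phi\in\mathcal{A}_T(r)$ with $\Re(A(\Phi))\ge0$; $\mathcal{P}$ is the class of connected graphs with GNRP. The sum of subgraphs is the subgraph consisting of all edges in at least one of them. A fundamental subgraph of $G$ w.r.t. $T$ is the sum of a maximal collection of fundamental cycles whose sum intersects $T$ in a subtree. A fundamental subgraph built from fundamental cycles $C_1,\dots,C_s$ has DEP if they can be ordered $C_{k_1},\dots,C_{k_s}$ with $|E(C_{k_i})\setminus E(C_{k_1}+\cdots+C_{k_{i-1}})|>1$ for $i=2,\dots,s$. A connected graph has DEP if every fundamental subgraph with respect to a normal spanning tree $T$ has DEP; $\mathfrak{F}$ is the collection of connected graphs with DEP. *)

(* Defs.v *)
From HB Require Import structures.
From mathcomp Require Import all_boot all_order all_algebra.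
From mathcomp Require Import boolp reals trigo.
From mathcomp Require complex.
Import complex.

Set Implicit Arguments.
Unset Strict Implicit.
Unset Printing Implicit Defensive.

Import Order.TTheory GRing.Theory Num.Theory.
Local Open Scope ring_scope.

(* Edges are the 2-element
   sets [set x; y]; subgraphs are given by their edge sets. *)
Definition simple_graph (V : finType) (e : rel V) : Prop :=
  (forall x, ~~ e x x) /\ (forall x y, e x y = e y x).

Section Graphs.
Variables (V : finType) (e : rel V).

Definition edges : {set {set V}} :=
  [set [set x; y] | x in V, y in V & e x y].

Definition frel (F : {set {set V}}) : rel V :=
  [rel x y | (x != y) && ([set x; y] \in F)].

Definition fverts (F : {set {set V}}) : {set V} :=
  [set x | [exists y, frel F x y]].

(* p is a (simple) path from x to y in the subgraph with edge set F,
   given as the sequence of vertices after x *)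
Definition fpath (F : {set {set V}}) (x y : V) (p : seq V) : bool :=
  [&& path (frel F) x p, last x p == y & uniq (x :: p)].

Definition walk_edges (x : V) (p : seq V) : {set {set V}} :=
  [set [set nth x (x :: p) (val i); nth x p (val i)] | i : 'I_(size p)].

Definition spanning_tree (Tr : {set {set V}}) : Prop :=
  [/\ Tr \subset edges,
      (forall x y, exists p, fpath Tr x y p) &
      (forall x y p q, fpath Tr x y p -> fpath Tr x y q -> p = q)].

(* tree order of the rooted spanning tree (Tr, r):
   x <= y iff x lies on the Tr-path from r to y *)
Definition tle (Tr : {set {set V}}) (r x y : V) : Prop :=
  forall p, fpath Tr r y p -> x \in r :: p.

Definition normal_tree (Tr : {set {set V}}) (r : V) : Prop :=
  spanning_tree Tr /\ (forall x y, e x y -> tle Tr r x y \/ tle Tr r y x).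

(* orientation of the suitably oriented graph G_T: the edge {x,y} with
   x <= y is oriented x -> y if it is a tree edge and y -> x otherwise.
   ori x y holds iff the edge {x,y} is oriented from x to y. *)
Definition ori (Tr : {set {set V}}) (r x y : V) : Prop :=
  if [set x; y] \in Tr then tle Tr r x y else tle Tr r y x.

(* non-tree edges of G (they index the m - n + 1 fundamental cycles) *)
Definition nontree (Tr : {set {set V}}) : {set {set V}} := edges :\: Tr.

Definition fcycle (Tr : {set {set V}}) (E : {set V}) : {set {set V}} :=
  [set F | `[< exists x y, [/\ E = [set x; y], x != y &
               (F = E \/ exists p, fpath Tr x y p /\ F \in walk_edges x p)] >]].

Definition fsum (Tr : {set {set V}}) (S : {set {set V}}) : {set {set V}} :=
  \bigcup_(E in S) fcycle Tr E.

Definition subtree (Tr F : {set {set V}}) : Prop :=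
  [/\ F != set0, F \subset Tr &
      forall x y, x \in fverts F -> y \in fverts F -> connect (frel F) x y].

Definition admissible (Tr S : {set {set V}}) : Prop :=
  [/\ S != set0, S \subset nontree Tr & subtree Tr (fsum Tr S :&: Tr)].

(* S is a maximal collection of fundamental cycles whose sum meets Tr in a
   subtree; fsum Tr S is then a fundamental subgraph w.r.t. Tr *)
Definition fundamental_collection (Tr S : {set {set V}}) : Prop :=
  admissible Tr S /\
  (forall S' : {set {set V}}, S \subset S' -> admissible Tr S' -> S' = S).

Definition DEP_collection (Tr S : {set {set V}}) : Prop :=
  exists s : seq {set V},
    [/\ uniq s, (forall E, E \in s <-> E \in S) &
        forall i, (0 < i < size s)%N ->
          (1 < #|fcycle Tr (nth set0 s i) :\:
                 \bigcup_(j < i) fcycle Tr (nth set0 s j)|)%N].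

Definition DEP_wrt (Tr : {set {set V}}) : Prop :=
  forall S, fundamental_collection Tr S -> DEP_collection Tr S.

Variable R : realType.

Definition expi (c : R) : R[i] := Complex (cos c) (sin c).

Definition is_Tgain (phi : V -> V -> R[i]) : Prop :=
  forall x y, e x y -> `|phi x y| = 1 /\ phi y x = (phi x y)^-1.

Definition gain_adj (phi : V -> V -> R[i]) (s t : V) : R[i] :=
  if e s t then phi s t else 0.

Definition cycle_gain (Tr : {set {set V}}) (r : V) (phi : V -> V -> R[i])
    (E : {set V}) : R[i] :=
  \prod_(xy : V * V | (xy.1 != xy.2) && ([set xy.1; xy.2] \in fcycle Tr E)
                      && `[< ori Tr r xy.1 xy.2 >]) phi xy.1 xy.2.

Definition GNRP_wrt (Tr : {set {set V}}) (r : V) : Prop :=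
  forall c : {set V} -> R,
    (forall E, E \in nontree Tr -> 0 <= c E < 2 * pi) ->
    exists phi : V -> V -> R[i],
      [/\ is_Tgain phi,
          (forall E, E \in nontree Tr -> cycle_gain Tr r phi E = expi (c E)) &
          (forall s t, 0 <= Re (gain_adj phi s t))].

End Graphs.

Definition K4 : rel 'I_4 := fun x y => x != y.

(* Main.v *)
Require Import Defs.
From HB Require Import structures.
From mathcomp Require Import all_boot all_order all_algebra.
From mathcomp Require Import boolp reals trigo.
From mathcomp Require complex.
From mathcomp.algebra_tactics Require Import ring lra.
Set Implicit Arguments. Unset Strict Implicit. Unset Printing Implicit Defensive.
Import Order.TTheory GRing.Theory Num.Theory.

Definition o0 : 'I_4 := @Ordinal 4 0 isT.
Definition o1 : 'I_4 := @Ordinal 4 1 isT.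
Definition o2 : 'I_4 := @Ordinal 4 2 isT.
Definition o3 : 'I_4 := @Ordinal 4 3 isT.
Definition ords : seq 'I_4 := [:: o0; o1; o2; o3].

Fixpoint seqs (n : nat) : seq (seq 'I_4) :=
  if n is n'.+1 then [::] :: [seq x :: s | x <- ords, s <- seqs n'] else [:: [::]].

Definition fpathb (t : rel 'I_4) (x y : 'I_4) (p : seq 'I_4) : bool :=
  [&& path t x p, last x p == y & uniq (x :: p)].
Definition paths t x y := [seq p <- seqs 3 | fpathb t x y p].
Definition pth t x y := head [::] (paths t x y).
Definition ptab t : 'I_4 -> 'I_4 -> seq 'I_4 :=
  let tab := [seq [seq pth t x y | y <- ords] | x <- ords] in
  fun x y => nth [::] (nth [::] tab x) y.
Definition N1' t (pt : 'I_4 -> 'I_4 -> seq 'I_4) := all (fun x => all (fun y => fpathb t x y (pt x y) &&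
    all (fun p => fpathb t x y p ==> (p == pt x y)) (seqs 3)) ords) ords.
Definition tleb (pt : 'I_4 -> 'I_4 -> seq 'I_4) (r x y : 'I_4) := x \in r :: pt r y.
Definition N2 pt (r : 'I_4) := all (fun x => all (fun y => (x != y) ==> tleb pt r x y || tleb pt r y x) ords) ords.

Definition eq2 (a b c d : 'I_4) := (a == c) && (b == d) || (a == d) && (b == c).
Definition inwalk (x : 'I_4) p a b :=
  has (fun i => eq2 a b (nth x (x :: p) i) (nth x p i)) (iota 0 (size p)).
Definition fcyc (pt : 'I_4 -> 'I_4 -> seq 'I_4) u w a b := eq2 a b u w || inwalk u (pt u w) a b || inwalk w (pt w u) a b.
Definition orib (t : rel 'I_4) pt r x y := if t x y then tleb pt r x y else tleb pt r y x.
Definition cpred t pt r u w x y := (x != y) && fcyc pt u w x y && orib t pt r x y.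
Definition predq (P : 'I_4 -> 'I_4 -> bool) (s : seq ('I_4 * 'I_4)) :=
  all (fun x => all (fun y => P x y == ((x,y) \in s)) ords) ords.

Definition vlab (pt : 'I_4 -> 'I_4 -> seq 'I_4) r :=
  [seq nth o0 [seq x <- ords | size (pt r x) == k] 0 | k <- iota 0 4].

Fixpoint allb n : seq (seq bool) :=
  if n is n'.+1 then [seq b :: s | b <- [:: true; false], s <- allb n'] else [:: [::]].

Definition code (x y : 'I_4) : nat :=
  let a := minn x y in let c := maxn x y in
  if a == 0%N then c.-1 else if a == 1%N then c.+1 else 5.
Definition mk (bs : seq bool) : rel 'I_4 := fun x y => (x != y) && nth false bs (code x y).


Definition chkall (P : 'I_4 -> 'I_4 -> bool) := all (fun x => all (fun y => P x y) ords) ords.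

Definition Goodv' (t : rel 'I_4) pt r (v : seq 'I_4) v0 v1 v2 v3 :=
  [&& [&& uniq v, size v == 4, v0 == r & [&& v0 != v2, v1 != v3 & v0 != v3]],
      [&& ~~ eq2 v0 v2 v1 v3, ~~ eq2 v0 v2 v0 v3 & ~~ eq2 v1 v3 v0 v3],
      [&& chkall (fun x y => t x y == (eq2 x y v0 v1 || eq2 x y v1 v2 || eq2 x y v2 v3)),
          chkall (fun x y => ((x != y) && ~~ t x y) == (eq2 x y v0 v2 || eq2 x y v1 v3 || eq2 x y v0 v3)) &
          chkall (fun x y => t x y ==> fcyc pt v0 v3 x y)],
      [&& [&& uniq [:: (v0, v1); (v1, v2); (v2, v0)], uniq [:: (v1, v2); (v2, v3); (v3, v1)]
            & uniq [:: (v0, v1); (v1, v2); (v2, v3); (v3, v0)]],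
          chkall (fun x y => cpred t pt r v0 v2 x y == ((x, y) \in [:: (v0, v1); (v1, v2); (v2, v0)])),
          chkall (fun x y => cpred t pt r v1 v3 x y == ((x, y) \in [:: (v1, v2); (v2, v3); (v3, v1)])) &
          chkall (fun x y => cpred t pt r v0 v3 x y == ((x, y) \in [:: (v0, v1); (v1, v2); (v2, v3); (v3, v0)]))] &
      [&& chkall (fun x y => fcyc pt v0 v2 x y && ~~ fcyc pt v1 v3 x y && ~~ fcyc pt v0 v3 x y ==> eq2 x y v0 v2),
          chkall (fun x y => fcyc pt v1 v3 x y && ~~ fcyc pt v0 v2 x y && ~~ fcyc pt v0 v3 x y ==> eq2 x y v1 v3) &
          chkall (fun x y => fcyc pt v0 v3 x y && ~~ fcyc pt v0 v2 x y && ~~ fcyc pt v1 v3 x y ==> eq2 x y v0 v3)]].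

Definition Goodv t pt r v := Goodv' t pt r v (nth o0 v 0) (nth o0 v 1) (nth o0 v 2) (nth o0 v 3).

Definition classif := all (fun bs => let t := mk bs in let pt := ptab t in
   N1' t pt ==> all (fun r => N2 pt r ==> Goodv t pt r (vlab pt r)) ords) (allb 6).

Lemma classifP : classif. Proof. vm_compute. reflexivity. Qed.

Lemma ordsP (x : 'I_4) : [\/ x = o0, x = o1, x = o2 | x = o3].
Proof.
case: x => [[|[|[|[|m]]]] Hm]; last by [].
- by apply: Or41; apply: val_inj.
- by apply: Or42; apply: val_inj.
- by apply: Or43; apply: val_inj.
- by apply: Or44; apply: val_inj.
Qed.

Lemma mem_ords (x : 'I_4) : x \in ords.
Proof. by case: (ordsP x) => ->; rewrite !inE eqxx ?orbT. Qed.

Lemma nth_ords (x : 'I_4) : nth o0 ords x = x.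
Proof. by case: (ordsP x) => ->. Qed.

Lemma chkallP P : chkall P -> forall x y, P x y.
Proof. by move=> /allP H x y; move/allP: (H x (mem_ords x)) => /(_ y (mem_ords y)). Qed.

Lemma seqsS n : seqs n.+1 = [::] :: [seq x :: s | x <- ords, s <- seqs n].
Proof. by []. Qed.

Lemma seqs_mem n (s : seq 'I_4) : size s <= n -> s \in seqs n.
Proof.
elim: n s => [|n IH] [|x s] // H; rewrite seqsS inE; apply/orP; right.
by apply/allpairsP; exists (x, s); split; [exact: mem_ords | exact: IH |].
Qed.

Lemma fpath_seqs (t : rel 'I_4) x y p : fpathb t x y p -> p \in seqs 3.
Proof.
case/and3P => _ _ U; apply: seqs_mem.
by have := uniq_leq_size U (fun z _ => mem_ords z).
Qed.

Lemma allbS n : allb n.+1 = [seq b :: s | b <- [:: true; false], s <- allb n].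
Proof. by []. Qed.

Lemma allb_mem (s : seq bool) : s \in allb (size s).
Proof.
elim: s => [|b s IH]; first by rewrite inE.
rewrite [size _]/= allbS.
by apply/allpairsP; exists (b, s); split => //; case: b; rewrite !inE.
Qed.

Lemma ptabE t : ptab t = pth t.
Proof.
apply: funext => x; apply: funext => y.
rewrite /ptab (nth_map o0) ?nth_ords ?(ltn_ord x) //.
by rewrite (nth_map o0) ?nth_ords ?(ltn_ord y).
Qed.

Lemma mk_bsOf (t : rel 'I_4) : (forall x, ~~ t x x) -> (forall x y, t x y = t y x) ->
  mk [:: t o0 o1; t o0 o2; t o0 o3; t o1 o2; t o1 o3; t o2 o3] = t.
Proof.
move=> irr sym; apply: funext => x; apply: funext => y.
by case: (ordsP x) => ->; case: (ordsP y) => ->; rewrite /mk /= ?(negbTE (irr _)) // sym.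
Qed.

Section Tree.
Variable Tr : {set {set 'I_4}}.
Local Notation t := (Defs.frel Tr).

Lemma frel_irr x : ~~ t x x.
Proof. by rewrite /Defs.frel /= eqxx. Qed.
Lemma frel_sym x y : t x y = t y x.
Proof. by rewrite /Defs.frel /= eq_sym setUC. Qed.

Lemma st_pth : spanning_tree K4 Tr -> forall x y p, Defs.fpath Tr x y p <-> p = pth t x y.
Proof.
case=> _ Ex Un x y p; have [q Hq] := Ex x y.
have Hm : q \in paths t x y by rewrite mem_filter; apply/andP; split; [exact: Hq | exact: fpath_seqs Hq].
have Hh : fpathb t x y (pth t x y).
  rewrite /pth; case E: (paths t x y) Hm => [|h l] // _.
  have: h \in paths t x y by rewrite E mem_head.
  by rewrite mem_filter => /andP[].
split=> [Hp|->//]; exact: Un Hp Hh.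
Qed.

Lemma tleE r x y : spanning_tree K4 Tr -> tle Tr r x y <-> tleb (pth t) r x y.
Proof.
move=> st; split=> [H|H q /(st_pth st) ->//].
by apply: H; apply/(st_pth st).
Qed.

Lemma N1_st : spanning_tree K4 Tr -> N1' t (pth t).
Proof.
move=> st; apply/allP=> x _; apply/allP=> y _; apply/andP; split.
  by apply/(st_pth st).
by apply/allP=> q _; apply/implyP=> Hq; apply/eqP; apply/(st_pth st).
Qed.

Lemma st_N1 : Tr \subset edges K4 -> N1' t (pth t) -> spanning_tree K4 Tr.
Proof.
move=> sub H.
have H' x y : fpathb t x y (pth t x y) &&
    all (fun p => fpathb t x y p ==> (p == pth t x y)) (seqs 3).
  by move/allP: H => /(_ x (mem_ords x)) /allP /(_ y (mem_ords y)).
split=> // [x y|x y p q Hp Hq]; first by exists (pth t x y); case/andP: (H' x y).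
case/andP: (H' x y) => _ /allP A.
by rewrite (eqP (implyP (A p (fpath_seqs Hp)) Hp)) (eqP (implyP (A q (fpath_seqs Hq)) Hq)).
Qed.

Lemma normal_bool r : normal_tree K4 Tr r ->
  [/\ Tr \subset edges K4, spanning_tree K4 Tr, N1' t (pth t) & N2 (pth t) r].
Proof.
case=> st nrm; split => //; first by case: st.
  exact: N1_st.
apply/allP=> x _; apply/allP=> y _; apply/implyP=> xy.
by case: (nrm x y xy) => /(tleE _ _ _ st) ->; rewrite ?orbT.
Qed.

Lemma bool_normal r : Tr \subset edges K4 -> N1' t (pth t) -> N2 (pth t) r ->
  normal_tree K4 Tr r.
Proof.
move=> sub n1 n2; have st := st_N1 sub n1; split=> // x y xy.
move/allP: n2 => /(_ x (mem_ords x)) /allP /(_ y (mem_ords y)) /implyP /(_ xy).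
by case/orP => H; [left|right]; apply/(tleE _ _ _ st).
Qed.

Lemma inTr a b : a != b -> ([set a; b] \in Tr) = t a b.
Proof. by move=> ab; rewrite /Defs.frel /= ab. Qed.

End Tree.

Lemma set2E (a b c d : 'I_4) : ([set a; b] == [set c; d]) = eq2 a b c d.
Proof.
apply/eqP/idP => [S|]; last first.
  by case/orP => /andP[/eqP-> /eqP->] //; rewrite setUC.
have Ha : a \in [set c; d] by rewrite -S !inE eqxx.
have Hb : b \in [set c; d] by rewrite -S !inE eqxx orbT.
have Hc : c \in [set a; b] by rewrite S !inE eqxx.
have Hd : d \in [set a; b] by rewrite S !inE eqxx orbT.
rewrite !inE in Ha Hb Hc Hd; rewrite /eq2.
case/orP: Ha => /eqP Ha; subst a.
  rewrite eqxx /=; case: (eqVneq b d) => [E|nbd]; first by [].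
  by move: Hd Hb; rewrite [d == b]eq_sym (negbTE nbd) !orbF => Hd Hb; rewrite eq_sym Hd Hb.
rewrite eqxx /=; case: (eqVneq c d) => [E|ncd]; first by move: Hb; rewrite E orbb => ->.
by move: Hc; rewrite (negbTE ncd) /= => Hc; rewrite eq_sym Hc.
Qed.

Lemma walkE x p a b : ([set a; b] \in walk_edges x p) = inwalk x p a b.
Proof.
apply/imsetP/hasP => [[i _ /eqP]|[i]].
  by rewrite set2E => H; exists (val i) => //; rewrite mem_iota add0n ltn_ord.
rewrite mem_iota add0n => /andP[_ Hi] H.
by exists (Ordinal Hi) => //; apply/eqP; rewrite set2E.
Qed.

Lemma edgesE F : F \in edges K4 -> exists a b, a != b /\ F = [set a; b].
Proof. by case/imset2P => a b _; rewrite inE => ab ->; exists a, b. Qed.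

Lemma edges_of (a b : 'I_4) : a != b -> [set a; b] \in edges K4.
Proof. by move=> ab; apply/imset2P; exists a b => //; rewrite inE. Qed.

Section Tree2.
Variable Tr : {set {set 'I_4}}.
Local Notation t := (Defs.frel Tr).
Hypothesis st : spanning_tree K4 Tr.

Lemma fcycleE u w a b : u != w ->
  ([set a; b] \in Defs.fcycle Tr [set u; w]) = fcyc (pth t) u w a b.
Proof.
move=> uw; rewrite /Defs.fcycle inE /fcyc; apply/asboolP/idP.
- case=> x [y [E xy H]].
  move: E => /eqP; rewrite set2E => /orP[] /andP[/eqP ex /eqP ey]; rewrite -ex -ey in H.
  + case: H => [/eqP|[p [Hp Hw]]]; first by rewrite set2E => ->.
    move/(st_pth st): Hp => Hp; subst p; rewrite walkE in Hw; by rewrite Hw ?orbT.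
  + case: H => [/eqP|[p [Hp Hw]]]; first by rewrite set2E => ->.
    move/(st_pth st): Hp => Hp; subst p; rewrite walkE in Hw; by rewrite Hw ?orbT.
- case/orP => [/orP[]|] H.
  + by exists u, w; split => //; left; apply/eqP; rewrite set2E.
  + exists u, w; split => //; right; exists (pth t u w); split; first exact/(st_pth st).
    by rewrite walkE.
  + exists w, u; split; [by rewrite setUC | by rewrite eq_sym | right].
    exists (pth t w u); split; first exact/(st_pth st).
    by rewrite walkE.
Qed.

Lemma oriE r x y : x != y -> `[< ori Tr r x y >] = orib t (pth t) r x y.
Proof.
move=> xy; rewrite /ori /orib inTr //.
by case: (t x y); apply/asboolP/idP => H; apply/(tleE _ _ _ st).
Qed.
End Tree2.

Lemma fcycle2 (Tr : {set {set 'I_4}}) E F : F \in Defs.fcycle Tr E -> exists a b, F = [set a; b].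
Proof.
rewrite inE => /asboolP [x [y [E' xy [->|[p [_ /imsetP [i _ ->]]]]]]].
  by exists x, y.
by eexists; eexists.
Qed.

Local Open Scope ring_scope.

Section RealLemma.
Variables (R : realFieldType) (p : R).
Hypothesis hp : 0 < p.

Definition cg (x y : R) := exists k : int, x = y + k%:~R * (4 * p).

Lemma cg0 x y : x = y -> cg x y.
Proof. have hp0 := hp. by move=> ->; exists 0; rewrite mul0r addr0. Qed.
Lemma cgP x y : x = y + 4 * p -> cg x y.
Proof. have hp0 := hp. by move=> ->; exists 1; rewrite mul1r. Qed.
Lemma cgN x y : x = y - 4 * p -> cg x y.
Proof. have hp0 := hp. by move=> ->; exists (-1); rewrite mulN1r. Qed.
Lemma cg_trans x y z : cg x y -> cg y z -> cg x z.
Proof.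
have hp0 := hp.
move=> [k1 ->] [k2 ->]; exists (k2 + k1); rewrite intrD mulrDl; lra.
Qed.
Lemma cg_add x y x' y' : cg x y -> cg x' y' -> cg (x + x') (y + y').
Proof.
have hp0 := hp.
move=> [k1 ->] [k2 ->]; exists (k1 + k2); rewrite intrD mulrDl; lra.
Qed.
Lemma cg_sym x y : cg x y -> cg y x.
Proof. have hp0 := hp. move=> [k ->]; exists (- k); rewrite intrN mulNr; lra. Qed.

Lemma cg_lin x y x' y' : cg x y -> x' = x -> y = y' -> cg x' y'.
Proof. by move=> h -> <-. Qed.

Lemma red (c : R) : 0 <= c < 4 * p -> exists c' : R, -(2 * p) <= c' <= 2 * p /\ cg c' c.
Proof.
have hp0 := hp.
case/andP=> h1 h2; case: (lerP c (2 * p)) => h3.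
  by exists c; split; [apply/andP; split; lra | apply: cg0].
by exists (c - 4 * p); split; [apply/andP; split; lra | apply: cgN].
Qed.

Ltac cgt := first [apply: cg0; lra | apply: cgP; lra | apply: cgN; lra].
Ltac tryF F t e1 e2 := apply: (F t e1 e2);
  [apply/andP; split; lra|apply/andP; split; lra|apply/andP; split; lra|split; cgt|split; lra].

Lemma chooset (c1 c2 : R) : -(2 * p) <= c1 <= 2 * p -> -(2 * p) <= c2 <= 2 * p ->
  exists t e1 e2 : R, [/\ -p <= t <= p, -(2 * p) <= e1 <= 2 * p, -(2 * p) <= e2 <= 2 * p,
     cg e1 (c1 - t) /\ cg e2 (c2 - t) &
     [/\ e1 + e2 <= 2 * p, e1 - e2 <= 2 * p, e2 - e1 <= 2 * p & - e1 - e2 <= 2 * p]].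
Proof.
have hp0 := hp.
case/andP=> h1 h2 /andP[h3 h4].
have F (t e1 e2 : R) : -p <= t <= p -> -(2 * p) <= e1 <= 2 * p -> -(2 * p) <= e2 <= 2 * p ->
     cg e1 (c1 - t) /\ cg e2 (c2 - t) ->
     [/\ e1 + e2 <= 2 * p, e1 - e2 <= 2 * p, e2 - e1 <= 2 * p & - e1 - e2 <= 2 * p] ->
     exists t e1 e2 : R, [/\ -p <= t <= p, -(2 * p) <= e1 <= 2 * p, -(2 * p) <= e2 <= 2 * p,
     cg e1 (c1 - t) /\ cg e2 (c2 - t) &
     [/\ e1 + e2 <= 2 * p, e1 - e2 <= 2 * p, e2 - e1 <= 2 * p & - e1 - e2 <= 2 * p]].
  by move=> *; exists t, e1, e2.
case: (lerP 0 c1) => s1; case: (lerP 0 c2) => s2.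
- case: (lerP c1 c2) => o.
    case: (lerP c1 p) => q1; first by tryF F c1 (0:R) (c2 - c1).
    by tryF F p (c1 - p) (c2 - p).
  case: (lerP c2 p) => q2; first by tryF F c2 (c1 - c2) (0:R).
  by tryF F p (c1 - p) (c2 - p).
- case: (lerP (c1 - c2) (2 * p)) => o; first by tryF F (0:R) c1 c2.
  case: (lerP (c1 + c2) 0) => o2; first by tryF F p (c1 - p) (c2 + 3 * p).
  by tryF F (-p) (c1 - 3 * p) (c2 + p).
- case: (lerP (c2 - c1) (2 * p)) => o; first by tryF F (0:R) c1 c2.
  case: (lerP (c1 + c2) 0) => o2; first by tryF F p (c1 + 3 * p) (c2 - p).
  by tryF F (-p) (c1 + p) (c2 - 3 * p).
- case: (lerP c2 c1) => o.
    case: (lerP (-p) c1) => q1; first by tryF F c1 (0:R) (c2 - c1).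
    by tryF F (-p) (c1 + p) (c2 + p).
  case: (lerP (-p) c2) => q2; first by tryF F c2 (c1 - c2) (0:R).
  by tryF F (-p) (c1 + p) (c2 + p).
Qed.

Lemma Jlem (e : R) : -(2 * p) <= e <= 2 * p -> exists lo hi : R,
  [/\ -p <= lo, e - p <= lo, hi <= p, hi <= e + p &
      (0 <= e /\ hi - lo = 2 * p - e) \/ (e <= 0 /\ hi - lo = 2 * p + e)].
Proof.
have hp0 := hp.
case/andP=> h1 h2; case: (lerP 0 e) => s.
  by exists (e - p), p; split; try lra; left; split; lra.
by exists (-p), (e + p); split; try lra; right; split; lra.
Qed.

Lemma pick (L H c : R) : -(2 * p) <= L <= 2 * p -> L + 2 * p <= H -> -p <= c <= 5 * p ->
  exists s b : R, [/\ L <= s <= H, -p <= b <= p & cg (s + b) c].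
Proof.
have hp0 := hp.
case/andP=> h1 h2 h3 /andP[h4 h5].
have G (c'' : R) : cg c'' c -> L + p <= c'' < L + 5 * p ->
   exists s b : R, [/\ L <= s <= H, -p <= b <= p & cg (s + b) c].
  move=> hc /andP[k1 k2]; case: (lerP c'' (H + p)) => k3.
    exists (c'' - p), p; split; try (apply/andP; split; lra).
    by apply: cg_trans hc; apply: cg0; lra.
  exists L, (c'' - 4 * p - L); split; try (apply/andP; split; lra).
  by apply: cg_trans hc; apply: cgN; lra.
case: (ltrP c (L + p)) => k1.
  by apply: (G (c + 4 * p)); [apply: cgP; lra | apply/andP; split; lra].
case: (lerP (L + 5 * p) c) => k2.
  by apply: (G (c - 4 * p)); [apply: cgN; lra | apply/andP; split; lra].
by apply: (G c); [apply: cg0 | apply/andP; split; lra].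
Qed.

Lemma splitl (lo1 hi1 lo2 hi2 s : R) : lo1 <= hi1 -> lo2 <= hi2 -> lo1 + lo2 <= s <= hi1 + hi2 ->
  exists a1 a3 : R, [/\ lo1 <= a1 <= hi1, lo2 <= a3 <= hi2 & a1 + a3 = s].
Proof.
have hp0 := hp.
move=> h1 h2 /andP[h3 h4]; case: (lerP lo1 (s - hi2)) => k.
  by exists (s - hi2), hi2; split; try (apply/andP; split); lra.
by exists lo1, (s - lo1); split; try (apply/andP; split); lra.
Qed.

Definition inI x := -p <= x <= p.

Lemma real_main (c1 c2 c3 : R) : 0 <= c1 < 4 * p -> 0 <= c2 < 4 * p -> 0 <= c3 < 4 * p ->
  exists a1 a2 a3 b1 b2 b3 : R, [/\ [/\ inI a1, inI a2, inI a3 & [/\ inI b1, inI b2 & inI b3]],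
     cg (a1 + a2 + b1) c1, cg (a2 + a3 + b2) c2 & cg (a1 + a2 + a3 + b3) c3].
Proof.
have hp0 := hp.
move=> h1 h2 /andP[h3 h3'].
have [c1' [k1 g1]] := red h1; have [c2' [k2 g2]] := red h2.
have [t [e1 [e2 [ht he1 he2 [ge1 ge2] [s1 s2 s3 s4]]]]] := chooset k1 k2.
have [lo1 [hi1 [l1 l2 l3 l4 l5]]] := Jlem he1.
have [lo2 [hi2 [m1 m2 m3 m4 m5]]] := Jlem he2.
move: ht he1 he2 => /andP[t1 t2] /andP[f1 f2] /andP[f3 f4].
have [s [b [/andP[u1 u2] /andP[u3 u4] gs]]] : exists s b : R, [/\ lo1 + lo2 <= s <= hi1 + hi2, -p <= b <= p & cg (s + b) (c3 - t)].
  apply: pick; [apply/andP; split; lra | | apply/andP; split; lra].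
  by case: l5 => -[? ?]; case: m5 => -[? ?]; lra.
have [a1 [a3 [/andP[v1 v2] /andP[v3 v4] va]]] : exists a1 a3 : R, [/\ lo1 <= a1 <= hi1, lo2 <= a3 <= hi2 & a1 + a3 = s].
  by apply: splitl; [case: l5 => -[? ?]; lra | case: m5 => -[? ?]; lra | apply/andP; split; lra].
exists a1, t, a3, (e1 - a1), (e2 - a3), b; split.
- by rewrite /inI; split; [| | |split]; apply/andP; split; lra.
- apply: (cg_trans _ g1); apply: (cg_lin (cg_add (cg0 (erefl t)) ge1)); lra.
- apply: (cg_trans _ g2); apply: (cg_lin (cg_add (cg0 (erefl t)) ge2)); lra.
- apply: (cg_lin (cg_add (cg0 (erefl t)) gs)); lra.
Qed.
End RealLemma.

Import complex.

Section Expi.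
Variable R : realType.

Lemma expiD (a b : R) : expi a * expi b = expi (a + b).
Proof. by rewrite /expi cosD sinD; apply/eqP; rewrite eq_complex /= !eqxx /= addrC. Qed.

Lemma expi0 : expi (0 : R) = 1.
Proof. by rewrite /expi cos0 sin0. Qed.

Lemma expiN (a : R) : expi (- a) = (expi a)^-1.
Proof.
apply/esym/mulr1_eq; rewrite expiD subrr; exact: expi0.
Qed.

Lemma expi_norm (a : R) : `|expi a| = 1.
Proof. by rewrite normc_def /= cos2Dsin2 sqrtr1. Qed.

Lemma Re_expi_ge0 (a : R) : 0 <= cos a -> 0 <= 'Re (expi a).
Proof. by move=> h; rewrite -complexRe ler0c. Qed.

Lemma Re0_ge0 : 0 <= 'Re (0 : R[i]).
Proof. by rewrite -complexRe ler0c. Qed.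

Lemma expi_per (a : R) : expi (a + pi *+ 2) = expi a.
Proof. by rewrite /expi cosD2pi sinD2pi. Qed.

Lemma expi_nat (a : R) n : expi (a + n%:R * (pi *+ 2)) = expi a.
Proof.
elim: n => [|n IH]; first by rewrite mul0r addr0.
by rewrite -addn1 natrD mulrDl mul1r addrA expi_per IH.
Qed.

Lemma expi_int (a : R) (k : int) : expi (a + k%:~R * (pi *+ 2)) = expi a.
Proof.
case: k => n; first by rewrite pmulrn expi_nat.
rewrite NegzE intrN pmulrn mulNr.
by rewrite -(expi_nat (a - (n.+1)%:R * (pi *+ 2)) n.+1) subrK.
Qed.
End Expi.

Lemma classif_spec bs : bs \in allb 6 -> N1' (mk bs) (ptab (mk bs)) ->
  forall r, N2 (ptab (mk bs)) r -> Goodv (mk bs) (ptab (mk bs)) r (vlab (ptab (mk bs)) r).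
Proof.
move=> Hbs n1 r n2; have := allP classifP bs Hbs; move/implyP/(_ n1)/allP/(_ r (mem_ords r)).
by move/implyP/(_ n2).
Qed.

Lemma good_inst Tr r : normal_tree K4 Tr r -> exists v, Goodv (Defs.frel Tr) (pth (Defs.frel Tr)) r v.
Proof.
case/normal_bool => sub st n1 n2.
have E := mk_bsOf (@frel_irr Tr) (@frel_sym Tr).
have := classif_spec (allb_mem [:: Defs.frel Tr o0 o1; Defs.frel Tr o0 o2; Defs.frel Tr o0 o3;
        Defs.frel Tr o1 o2; Defs.frel Tr o1 o3; Defs.frel Tr o2 o3]).
rewrite E ptabE => /(_ n1 r n2) H.
by eexists; exact: H.
Qed.

Lemma eq2xx (a b : 'I_4) : eq2 a b a b.
Proof. by rewrite /eq2 !eqxx. Qed.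

Definition th (R : realType) (a1 a2 a3 b1 b2 b3 : R) (i j : nat) : R :=
  match i, j with
  | O, S O => a1 | S O, O => - a1 | S O, S (S O) => a2 | S (S O), S O => - a2
  | S (S O), S (S (S O)) => a3 | S (S (S O)), S (S O) => - a3
  | S (S O), O => b1 | O, S (S O) => - b1 | S (S (S O)), S O => b2 | S O, S (S (S O)) => - b2
  | S (S (S O)), O => b3 | O, S (S (S O)) => - b3 | _, _ => 0 end.

Lemma thS (R : realType) (a1 a2 a3 b1 b2 b3 : R) i j :
  th a1 a2 a3 b1 b2 b3 j i = - th a1 a2 a3 b1 b2 b3 i j.
Proof.
by case: i => [|[|[|[|i]]]]; case: j => [|[|[|[|j]]]]; rewrite /th /= ?opprK ?oppr0.
Qed.

Lemma thI (R : realType) (p a1 a2 a3 b1 b2 b3 : R) i j : 0 < p ->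
  [/\ inI p a1, inI p a2, inI p a3 & [/\ inI p b1, inI p b2 & inI p b3]] ->
  inI p (th a1 a2 a3 b1 b2 b3 i j).
Proof.
move=> hp [i1 i2 i3 [j1 j2 j3]].
have N x : inI p x -> inI p (- x) by rewrite /inI => /andP [h1 h2]; apply/andP; split; lra.
have Z : inI p 0 by rewrite /inI; apply/andP; split; lra.
by case: i => [|[|[|[|i]]]]; case: j => [|[|[|[|j]]]]; rewrite /th /=; auto.
Qed.

Lemma cg_expi (R : realType) (x y : R) : cg (pi / 2) x y -> expi x = expi y.
Proof.
case=> k ->; rewrite (_ : 4 * (pi / 2) = pi *+ 2) ?expi_int //.
by rewrite mulr2n; field.
Qed.

Section Main.
Variables (R : realType) (Tr : {set {set 'I_4}}) (r : 'I_4) (v : seq 'I_4).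
Hypothesis nt : normal_tree K4 Tr r.
Hypothesis gd : Goodv (Defs.frel Tr) (pth (Defs.frel Tr)) r v.
Local Notation tr := (Defs.frel Tr).
Local Notation pt := (pth (Defs.frel Tr)).

Lemma main_good : ~ DEP_wrt K4 Tr /\ GNRP_wrt K4 R Tr r.
Proof.
have [sub st _ _] := normal_bool nt.
move: gd; rewrite /Goodv.
set v0 := nth o0 v 0; set v1 := nth o0 v 1; set v2 := nth o0 v 2; set v3 := nth o0 v 3.
case/and5P => /and4P [Uv Sv Rv /and3P [d02 d13 d03]] /and3P [n1 n2 n3] /and3P [Ct Cn Ctc].
case/and4P => /and3P [U02 U13 U03] P02 P13 P03 /and3P [D02 D13 D03].
have treeE x y : tr x y = eq2 x y v0 v1 || eq2 x y v1 v2 || eq2 x y v2 v3.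
  exact/eqP/(chkallP Ct x y).
have ntE x y : (x != y) && ~~ tr x y = eq2 x y v0 v2 || eq2 x y v1 v3 || eq2 x y v0 v3.
  exact/eqP/(chkallP Cn x y).
set E02 := [set v0; v2]; set E13 := [set v1; v3]; set E03 := [set v0; v3].
have nontreeE E : E \in nontree K4 Tr <-> [\/ E = E02, E = E13 | E = E03].
  split.
    rewrite inE => /andP [nE /edgesE [a [b [ab Eab]]]]; subst E.
    rewrite inTr // in nE; have := ntE a b; rewrite ab nE /= => /esym.
    by case/orP => [/orP[]|]; rewrite -set2E => /eqP ->; [apply: Or31|apply: Or32|apply: Or33].
  have H a b : a != b -> (eq2 a b v0 v2 || eq2 a b v1 v3 || eq2 a b v0 v3) -> [set a; b] \in nontree K4 Tr.
    move=> ab hab; rewrite inE edges_of // andbT inTr //.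
    by move: (ntE a b); rewrite hab ab => /andP[].
  by case=> ->; apply: H; rewrite ?eq2xx ?orbT.
have nt02 : E02 \in nontree K4 Tr by apply/nontreeE; apply: Or31.
have nt13 : E13 \in nontree K4 Tr by apply/nontreeE; apply: Or32.
have nt03 : E03 \in nontree K4 Tr by apply/nontreeE; apply: Or33.
have fc02 a b : ([set a; b] \in Defs.fcycle Tr E02) = fcyc pt v0 v2 a b := fcycleE st a b d02.
have fc13 a b : ([set a; b] \in Defs.fcycle Tr E13) = fcyc pt v1 v3 a b := fcycleE st a b d13.
have fc03 a b : ([set a; b] \in Defs.fcycle Tr E03) = fcyc pt v0 v3 a b := fcycleE st a b d03.
split.
-
  move=> dep.
  have adm : admissible K4 Tr (nontree K4 Tr).
    split => //; first by apply/set0Pn; exists E02.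
    have -> : fsum Tr (nontree K4 Tr) :&: Tr = Tr.
      apply/setP => F; rewrite inE; apply/andb_idl => FT.
      have [a [b [ab Fab]]] := edgesE (subsetP sub F FT); subst F.
      have tab : tr a b by rewrite /Defs.frel /= ab FT.
      apply/bigcupP; exists E03 => //; rewrite fc03.
      exact: (implyP (chkallP Ctc a b) tab).
    split => //.
      apply/set0Pn; exists [set v0; v1].
      by have := treeE v0 v1; rewrite eq2xx /= => /andP[].
    move=> x y _ _; have := (st_pth st x y (pt x y)).2 erefl.
    by case/and3P => P L _; apply/connectP; exists (pt x y) => //; rewrite (eqP L).
  have fc : fundamental_collection K4 Tr (nontree K4 Tr).
    split => // S' sS' [_ sub' _]; apply/eqP; by rewrite eqEsubset sub' sS'.
  case: (dep _ fc) => s [Us Ms Hs].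
  have u3 : uniq [:: E02; E13; E03].
    by rewrite /= !inE !set2E negb_or n1 n2 n3.
  have s3 : (3 <= size s)%N.
    by apply: (uniq_leq_size u3) => E; rewrite !inE => /or3P [] /eqP ->; apply/Ms; rewrite ?nt02 ?nt13 ?nt03.
  have s3' : (size s <= 3)%N.
    by apply: (@uniq_leq_size _ s [:: E02; E13; E03] Us) => E /Ms /nontreeE [] ->; rewrite !inE eqxx ?orbT.
  move: Us Ms Hs s3 s3'; case: s => [|x0 [|x1 [|x2 [|x3 s']]]] // Us Ms Hs _ _.
  have := Hs 2%N isT; apply/negP; rewrite -leqNgt.
  apply: (leq_trans (subset_leq_card (_ : _ \subset [set x2]))); last by rewrite cards1.
  apply/subsetP => F; rewrite in_setD in_set1 => /andP [nU Fx2].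
  have nf0 : F \notin Defs.fcycle Tr x0.
    by apply: contra nU => H; apply/bigcupP; exists (@Ordinal 2 0 isT).
  have nf1 : F \notin Defs.fcycle Tr x1.
    by apply: contra nU => H; apply/bigcupP; exists (@Ordinal 2 1 isT).
  have notin E : E \in nontree K4 Tr -> E != x2 -> F \notin Defs.fcycle Tr E.
    by move/Ms; rewrite !in_cons in_nil orbF => /or3P [/eqP->|/eqP->|/eqP->] => [_|_|] //; rewrite eqxx.
  have [a [b Fab]] := fcycle2 Fx2; subst F.
  have e0213 : E02 != E13 by rewrite set2E.
  have e0203 : E02 != E03 by rewrite set2E.
  have e1303 : E13 != E03 by rewrite set2E.
  have : x2 \in nontree K4 Tr by apply/Ms; rewrite !inE eqxx ?orbT.
  case/nontreeE => ex2; rewrite ex2 in Fx2 *.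
  + have hh1 : [set a; b] \notin Defs.fcycle Tr E13 by apply: notin nt13 _; rewrite ex2 // eq_sym.
    have hh2 : [set a; b] \notin Defs.fcycle Tr E03 by apply: notin nt03 _; rewrite ex2 // eq_sym.
    rewrite fc13 in hh1; rewrite fc03 in hh2; rewrite fc02 in Fx2.
    have := chkallP D02 a b; rewrite Fx2 (negbTE hh1) (negbTE hh2).
    by move/implyP/(_ isT); rewrite -set2E.
  + have hh1 : [set a; b] \notin Defs.fcycle Tr E02 by apply: notin nt02 _; rewrite ex2 // eq_sym.
    have hh2 : [set a; b] \notin Defs.fcycle Tr E03 by apply: notin nt03 _; rewrite ex2 // eq_sym.
    rewrite fc02 in hh1; rewrite fc03 in hh2; rewrite fc13 in Fx2.
    have := chkallP D13 a b; rewrite Fx2 (negbTE hh1) (negbTE hh2).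
    by move/implyP/(_ isT); rewrite -set2E.
  + have hh1 : [set a; b] \notin Defs.fcycle Tr E02 by apply: notin nt02 _; rewrite ex2 // eq_sym.
    have hh2 : [set a; b] \notin Defs.fcycle Tr E13 by apply: notin nt13 _; rewrite ex2 // eq_sym.
    rewrite fc02 in hh1; rewrite fc13 in hh2; rewrite fc03 in Fx2.
    have := chkallP D03 a b; rewrite Fx2 (negbTE hh1) (negbTE hh2).
    by move/implyP/(_ isT); rewrite -set2E.
- move=> c hc.
  have hp : 0 < pi / 2 :> R by rewrite divr_gt0 ?pi_gt0.
  have bnd E : E \in nontree K4 Tr -> 0 <= c E < 4 * (pi / 2).
    have e4 : 4 * (pi / 2) = 2 * pi :> R by field.
    by rewrite e4; apply: hc.
  have [a1 [a2 [a3 [b1 [b2 [b3 [II g1 g2 g3]]]]]]] :=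
    real_main hp (bnd _ nt02) (bnd _ nt13) (bnd _ nt03).
  pose phi := fun x y => expi (th a1 a2 a3 b1 b2 b3 (index x v) (index y v)).
  have iv0 : index v0 v = 0%N by rewrite index_uniq ?(eqP Sv).
  have iv1 : index v1 v = 1%N by rewrite index_uniq ?(eqP Sv).
  have iv2 : index v2 v = 2%N by rewrite index_uniq ?(eqP Sv).
  have iv3 : index v3 v = 3%N by rewrite index_uniq ?(eqP Sv).
  exists phi; split.
  + move=> x y _; split; first exact: expi_norm.
    by rewrite /phi thS expiN.
  + move=> E /nontreeE [] ->.
    * rewrite /cycle_gain (eq_bigl (fun xy => xy \in [:: (v0, v1); (v1, v2); (v2, v0)])); last first.
        case=> x y /=; case: (eqVneq x y) => [<-|xy] /=.
          by move: (chkallP P02 x x); rewrite /cpred eqxx => /eqP <-.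
        rewrite fc02 (oriE st r xy).
        by move: (chkallP P02 x y); rewrite /cpred xy => /eqP.
      rewrite -big_uniq // !big_cons big_nil /= mulr1 /phi iv0 iv1 iv2 /th /= !expiD addrA.
      exact: cg_expi g1.
    * rewrite /cycle_gain (eq_bigl (fun xy => xy \in [:: (v1, v2); (v2, v3); (v3, v1)])); last first.
        case=> x y /=; case: (eqVneq x y) => [<-|xy] /=.
          by move: (chkallP P13 x x); rewrite /cpred eqxx => /eqP <-.
        rewrite fc13 (oriE st r xy).
        by move: (chkallP P13 x y); rewrite /cpred xy => /eqP.
      rewrite -big_uniq // !big_cons big_nil /= mulr1 /phi iv1 iv2 iv3 /th /= !expiD addrA.
      exact: cg_expi g2.
    * rewrite /cycle_gain (eq_bigl (fun xy => xy \in [:: (v0, v1); (v1, v2); (v2, v3); (v3, v0)])); last first.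
        case=> x y /=; case: (eqVneq x y) => [<-|xy] /=.
          by move: (chkallP P03 x x); rewrite /cpred eqxx => /eqP <-.
        rewrite fc03 (oriE st r xy).
        by move: (chkallP P03 x y); rewrite /cpred xy => /eqP.
      rewrite -big_uniq // !big_cons big_nil /= mulr1 /phi iv0 iv1 iv2 iv3 /th /= !expiD !addrA.
      exact: cg_expi g3.
  + move=> s t; rewrite /gain_adj; case: (K4 s t); last exact: Re0_ge0.
    by apply: Re_expi_ge0; apply: cos_ge0_pihalf; apply: thI.
Qed.

End Main.


Definition Tr0 : {set {set 'I_4}} := [set [set o0; o1]; [set o1; o2]; [set o2; o3]].
Definition t0 (x y : 'I_4) := (x != y) && (eq2 x y o0 o1 || (eq2 x y o1 o2 || eq2 x y o2 o3)).

Lemma frel_Tr0 : Defs.frel Tr0 = t0.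
Proof.
apply: funext => x; apply: funext => y.
by rewrite /Defs.frel /t0 /Tr0 /= !inE !set2E -orbA.
Qed.

Lemma N1_Tr0 : N1' t0 (pth t0). Proof. vm_compute. reflexivity. Qed.
Lemma N2_Tr0 : N2 (pth t0) o0. Proof. vm_compute. reflexivity. Qed.

Local Close Scope ring_scope.
Unset Implicit Arguments.

Theorem theorem4p3 (R : realType) :
  simple_graph K4 /\
  (exists (Tr : {set {set 'I_4}}) (r : 'I_4), normal_tree K4 Tr r) /\
  (forall (Tr : {set {set 'I_4}}) (r : 'I_4), normal_tree K4 Tr r ->
     ~ DEP_wrt K4 Tr /\ GNRP_wrt K4 R Tr r).
Proof.
split; [|split].
- by split => [x|x y]; rewrite /K4 ?eqxx // eq_sym.
- exists Tr0, o0; apply: bool_normal; rewrite ?frel_Tr0.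
  + apply/subsetP => F; rewrite /Tr0 !inE => /orP [/orP [/eqP -> | /eqP ->] | /eqP ->]; exact: edges_of.
  + exact: N1_Tr0.
  + exact: N2_Tr0.
- move=> Tr r nt; have [v gd] := good_inst nt; exact: main_good nt gd.
Qed.
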